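(* Let $f,g$ be smooth functions on an open interval $J\subset\mathbb{R}$, let $F$ be an antiderivative of $f$, $M=e^{2F}$, and let $V$ and $Q$ be functions on $J$ with $V'=Mg$ and $Q'=\sqrt M=e^{F}$. Suppose there are constants $A$ and $B\neq0$ and a constant $V_0$ such that $V=AQ^2+B/Q^2+V_0$ on $J$ (with $Q\neq0$ on $J$). Then, wherever the denominators below are nonzero, $$f=-\frac54\,\frac{g''+(fg)'}{g'+fg-2A}+\frac{g'''+(fg)''}{g''+(fg)'} .$$
   Context: Primes denote derivatives with respect to $x$. This is the necessary condition for the potential $V(x)=\int^xM(s)g(s)\,ds$ of the Liénard-II equation $\ddot x+f(x)\dot x^2+g(x)=0$ (with Lagrangian $L=\frac12M(x)\dot x^2-V(x)$, $M$ the Jacobi last multiplier) to be of the superintegrable form $AQ^2+B/Q^2$. *)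

(* Defs.v *)
From Stdlib Require Import Reals.
Open Scope R_scope.

Definition is_open_interval (J : R -> Prop) : Prop :=
  (exists x, J x) /\
  (forall x y z, J x -> J z -> x <= y <= z -> J y) /\
  (forall x, J x -> exists e, 0 < e /\ forall y, Rabs (y - x) < e -> J y).

(* Main.v *)
Require Import Defs.
From Stdlib Require Import Reals Lra Field.
Open Scope R_scope.

Lemma D_eq (J : R -> Prop) (HJ : is_open_interval J) x (Jx : J x) f g l1 l2 :
  (forall y, J y -> f y = g y) -> derivable_pt_lim f x l1 ->
  derivable_pt_lim g x l2 -> l1 = l2.
Proof.
  intros E H1 H2. destruct HJ as [_ [_ Ho]]. destruct (Ho x Jx) as [e [He Hy]].
  apply (uniqueness_limite g x l1 l2); [|exact H2].
  intros eps Heps. destruct (H1 eps Heps) as [d Hd].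
  assert (Hm : 0 < Rmin d e) by (apply Rmin_pos; [apply cond_pos|lra]).
  exists (mkposreal _ Hm). intros h Hh Ha. simpl in Ha.
  rewrite <- (E x Jx), <- (E (x+h)).
  - apply Hd; auto. eapply Rlt_le_trans; [exact Ha| apply Rmin_l].
  - apply Hy. replace (x + h - x) with h by ring.
    eapply Rlt_le_trans; [exact Ha| apply Rmin_r].
Qed.

Lemma Dmul f g x a b : derivable_pt_lim f x a -> derivable_pt_lim g x b ->
  derivable_pt_lim (fun y => f y * g y) x (a * g x + f x * b).
Proof. intros; exact (derivable_pt_lim_mult f g x a b H H0). Qed.
Lemma Dadd f g x a b : derivable_pt_lim f x a -> derivable_pt_lim g x b ->
  derivable_pt_lim (fun y => f y + g y) x (a + b).
Proof. intros; exact (derivable_pt_lim_plus f g x a b H H0). Qed.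
Lemma Dcst c x : derivable_pt_lim (fun _ => c) x 0.
Proof. exact (derivable_pt_lim_const c x). Qed.
Lemma Dinv f x a : f x <> 0 -> derivable_pt_lim f x a ->
  derivable_pt_lim (fun y => / f y) x (- a / (f x * f x)).
Proof.
  intros Hn H.
  assert (H' := derivable_pt_lim_div (fct_cte 1) f x 0 a (derivable_pt_lim_const 1 x) H Hn).
  unfold div_fct, fct_cte, Rsqr in H'.
  replace (- a / (f x * f x)) with ((0 * f x - a * 1) / (f x * f x)) by (field; auto).
  intros eps He; destruct (H' eps He) as [d Hd]; exists d; intros h Hh Ha.
  specialize (Hd h Hh Ha). replace (1 / f (x+h)) with (/ f (x+h)) in Hd by (unfold Rdiv; ring).
  replace (1 / f x) with (/ f x) in Hd by (unfold Rdiv; ring). exact Hd.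
Qed.
Lemma Dexp F x a : derivable_pt_lim F x a ->
  derivable_pt_lim (fun y => exp (F y)) x (exp (F x) * a).
Proof. intros H. exact (derivable_pt_lim_comp F exp x a _ H (derivable_pt_lim_exp (F x))). Qed.

Theorem mainTheorem13
  (J : R -> Prop) (HJ : is_open_interval J)
  (f g g1 g2 g3 p1 p2 F V Q : R -> R) (A B V0 : R)
  (Hg1 : forall x, J x -> derivable_pt_lim g x (g1 x))
  (Hg2 : forall x, J x -> derivable_pt_lim g1 x (g2 x))
  (Hg3 : forall x, J x -> derivable_pt_lim g2 x (g3 x))
  (Hp1 : forall x, J x -> derivable_pt_lim (fun y => f y * g y) x (p1 x))
  (Hp2 : forall x, J x -> derivable_pt_lim p1 x (p2 x))
  (HF : forall x, J x -> derivable_pt_lim F x (f x))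
  (HV : forall x, J x -> derivable_pt_lim V x (exp (2 * F x) * g x))
  (HQ : forall x, J x -> derivable_pt_lim Q x (sqrt (exp (2 * F x))))
  (HB : B <> 0)
  (HQ0 : forall x, J x -> Q x <> 0)
  (HVQ : forall x, J x -> V x = A * (Q x) ^ 2 + B / (Q x) ^ 2 + V0) :
  forall x, J x ->
    g1 x + f x * g x - 2 * A <> 0 ->
    g2 x + p1 x <> 0 ->
    f x = - (5 / 4) * ((g2 x + p1 x) / (g1 x + f x * g x - 2 * A))
          + (g3 x + p2 x) / (g2 x + p1 x).
Proof.
  set (W := fun y => exp (F y)).
  set (u := fun y => / Q y).
  assert (HW : forall y, J y -> derivable_pt_lim W y (W y * f y))
    by (intros; apply Dexp; auto).
  assert (HWp : forall y, W y > 0) by (intros; apply exp_pos).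
  assert (HQ' : forall y, J y -> derivable_pt_lim Q y (W y)).
  { intros y Jy. replace (W y) with (sqrt (exp (2 * F y))); auto.
    replace (2 * F y) with (F y + F y) by ring. rewrite exp_plus.
    apply sqrt_square. apply Rlt_le, exp_pos. }
  assert (Hu : forall y, J y -> derivable_pt_lim u y (- W y * (u y * u y))).
  { intros y Jy. unfold u; cbv beta. replace (- W y * (/ Q y * / Q y)) with (- W y / (Q y * Q y))
      by (field; auto). apply Dinv; auto. }
  assert (Hun : forall y, J y -> u y <> 0) by (intros; unfold u; apply Rinv_neq_0_compat; auto).
  assert (E1 : forall y, J y -> W y * g y = 2 * A * Q y - 2 * B * (u y * (u y * u y))).
  { intros y Jy.
    assert (D1 := Dadd _ _ y _ _ (Dadd _ _ y _ _
        (Dmul (fun z => A * Q z) Q y _ _ (Dmul (fun _ => A) Q y _ _ (Dcst A y) (HQ' y Jy)) (HQ' y Jy))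
        (Dmul (fun _ => B) (fun z => u z * u z) y _ _ (Dcst B y)
           (Dmul u u y _ _ (Hu y Jy) (Hu y Jy)))) (Dcst V0 y)).
    assert (Ez : forall z, J z -> V z = A * Q z * Q z + B * (u z * u z) + V0)
      by (intros z Jz; rewrite (HVQ z Jz); unfold u; field; auto).
    assert (Eq := D_eq J HJ y Jy V _ _ _ Ez (HV y Jy) D1).
    cbv beta in Eq.
    replace (2 * F y) with (F y + F y) in Eq by ring. rewrite exp_plus in Eq.
    fold (W y) in Eq.
    assert (W y <> 0) by (specialize (HWp y); lra).
    apply (Rmult_eq_reg_l (W y)); auto.
    rewrite <- Rmult_assoc, Eq. unfold u. field. auto. }
  assert (E2 : forall y, J y -> g1 y + f y * g y = 2 * A + 6 * B * (u y * u y * (u y * u y))).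
  { intros y Jy.
    assert (DL := Dmul W g y _ _ (HW y Jy) (Hg1 y Jy)).
    assert (DR := Dadd _ _ y _ _ (Dmul (fun _ => 2 * A) Q y _ _ (Dcst _ y) (HQ' y Jy))
        (Dmul (fun _ => - 2 * B) (fun z => u z * (u z * u z)) y _ _ (Dcst _ y)
          (Dmul u (fun z => u z * u z) y _ _ (Hu y Jy) (Dmul u u y _ _ (Hu y Jy) (Hu y Jy))))).
    assert (Ez : forall z, J z -> W z * g z = 2 * A * Q z + - 2 * B * (u z * (u z * u z)))
      by (intros z Jz; rewrite (E1 z Jz); ring).
    assert (Eq := D_eq J HJ y Jy _ _ _ _ Ez DL DR).
    cbv beta in Eq.
    assert (W y <> 0) by (specialize (HWp y); lra).
    apply (Rmult_eq_reg_l (W y)); auto. rewrite Rmult_plus_distr_l.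
    replace (W y * g1 y + W y * (f y * g y)) with (W y * f y * g y + W y * g1 y) by ring.
    rewrite Eq. ring. }
  assert (E3 : forall y, J y -> g2 y + p1 y = - 24 * B * (u y * u y * (u y * u y) * u y) * W y).
  { intros y Jy.
    assert (DL := Dadd _ _ y _ _ (Hg2 y Jy) (Hp1 y Jy)).
    assert (DR := Dadd _ _ y _ _ (Dcst (2*A) y) (Dmul (fun _ => 6 * B) (fun z => u z * u z * (u z * u z)) y _ _ (Dcst _ y)
        (Dmul (fun z => u z * u z) (fun z => u z * u z) y _ _ (Dmul u u y _ _ (Hu y Jy) (Hu y Jy)) (Dmul u u y _ _ (Hu y Jy) (Hu y Jy))))).
    assert (Eq := D_eq J HJ y Jy _ _ _ _ (fun z Jz => E2 z Jz) DL DR).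
    cbv beta in Eq. rewrite Eq. ring. }
  intros x Jx Hd1 Hd2.
  assert (DL := Dadd _ _ x _ _ (Hg3 x Jx) (Hp2 x Jx)).
  set (u5 := fun z => u z * u z * (u z * u z) * u z).
  assert (Du5 : derivable_pt_lim u5 x (5 * (u x * u x * (u x * u x)) * (- W x * (u x * u x)))).
  { assert (D := Dmul (fun z => u z * u z * (u z * u z)) u x _ _
      (Dmul (fun z => u z * u z) (fun z => u z * u z) x _ _ (Dmul u u x _ _ (Hu x Jx) (Hu x Jx)) (Dmul u u x _ _ (Hu x Jx) (Hu x Jx))) (Hu x Jx)).
    unfold u5. replace (5 * (u x * u x * (u x * u x)) * (- W x * (u x * u x))) with
     (((- W x * (u x * u x) * u x + u x * (- W x * (u x * u x))) * (u x * u x) +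
       u x * u x * (- W x * (u x * u x) * u x + u x * (- W x * (u x * u x)))) * u x +
      u x * u x * (u x * u x) * (- W x * (u x * u x))) by ring. exact D. }
  assert (DR := Dmul (fun z => - 24 * B * u5 z) W x _ _ (Dmul (fun _ => - 24 * B) u5 x _ _ (Dcst _ x) Du5) (HW x Jx)).
  assert (Eq := D_eq J HJ x Jx (fun z => g2 z + p1 z) _ _ _ (fun z Jz => E3 z Jz) DL DR).
  cbv beta in Eq. unfold u5 in Eq.
  rewrite Eq, (E3 x Jx).
  replace (g1 x + f x * g x - 2 * A) with (6 * B * (u x * u x * (u x * u x))) by (rewrite (E2 x Jx); ring).
  assert (W x <> 0) by (specialize (HWp x); lra).
  assert (u x <> 0) by auto.
  field. repeat split; auto.
Qed.
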